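(* Let $\|\cdot\|$ be a polyhedral seminorm on $\mathbb{R}^n$, let $\mathcal{B}=\{x:\|x\|\le1\}$ and $p^*=W(\mathcal{B})$. Then there is a set $\Sigma$ of real $n\times n$ matrices for which $\|\cdot\|$ is nonincreasing and such that (i) every infinite periodic product of matrices from $\Sigma$ with period smaller than $p^*$ contracts $\|\cdot\|$, and (ii) not every left-infinite product of matrices from $\Sigma$ contracts $\|\cdot\|$.
   Context: A seminorm is polyhedral if its unit ball is a polyhedron (defined by finitely many linear inequalities). $\|\cdot\|$ is nonincreasing for $\Sigma$ if $\|Ax\|\le\|x\|$ for all $x$ and all $A\in\Sigma$. A left-infinite product $\dots A_{\sigma(2)}A_{\sigma(1)}$ contracts $\|\cdot\|$ if there is $t$ with $A_{\sigma(t)}\cdots A_{\sigma(1)}\mathcal{B}\subset\mathrm{int}(\mathcal{B})$; it is periodic with period $p$ if $\sigma(i+p)=\sigma(i)$ for all $i$. For a polyhedron $\mathcal{Q}$, a face is $\mathcal{Q}$, $\varnothing$, or a nonempty set $\mathcal{Q}\cap\{x:b^\top x=c\}$ where $b^\top x\le c$ on $\mathcal{Q}$; a proper face is a face other than $\mathcal{Q},\varnothing$. For centrally symmetric $\mathcal{Q}$, a double-face is $F\cup-F$ with $F$ a proper face; the lattice of double-faces is the set of double-faces together with $\mathcal{Q}$ and $\varnothing$, ordered by inclusion; $W(\mathcal{Q})$ is the maximum size of an antichain (set of pairwise incomparable elements) in this lattice. *)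

(* Defs.v *)
From HB Require Import structures.
From mathcomp Require Import all_boot all_order all_algebra.
From mathcomp Require Import reals.
Set Implicit Arguments. Unset Strict Implicit. Unset Printing Implicit Defensive.
Import Order.TTheory GRing.Theory Num.Theory.
Local Open Scope ring_scope.

Definition is_seminorm (R : realType) (n : nat) (N : 'cV[R]_n -> R) : Prop :=
  (forall x y, N (x + y) <= N x + N y) /\ (forall (a : R) x, N (a *: x) = `|a| * N x).

Definition is_polyhedron (R : realType) (n : nat) (P : 'cV[R]_n -> Prop) : Prop :=
  exists (m : nat) (C : 'M[R]_(m, n)) (d : 'cV[R]_m),
    forall x, P x <-> (forall i, (C *m x) i 0 <= d i 0).

Definition unit_ball (R : realType) (n : nat) (N : 'cV[R]_n -> R) : 'cV[R]_n -> Prop :=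
  fun x => N x <= 1.

Definition polyhedral_seminorm (R : realType) (n : nat) (N : 'cV[R]_n -> R) : Prop :=
  is_seminorm N /\ is_polyhedron (unit_ball N).

(* interior w.r.t. the standard topology of R^n (sup-norm balls) *)
Definition in_interior (R : realType) (n : nat) (P : 'cV[R]_n -> Prop) (x : 'cV[R]_n) : Prop :=
  exists e : R, 0 < e /\ forall y : 'cV[R]_n, (forall i, `|y i 0 - x i 0| < e) -> P y.

Definition dotv (R : realType) (n : nat) (b x : 'cV[R]_n) : R := \sum_(i < n) b i 0 * x i 0.

Definition emptyset {R : realType} {n : nat} : 'cV[R]_n -> Prop := fun _ => False.

Definition is_face (R : realType) (n : nat) (Q F : 'cV[R]_n -> Prop) : Prop :=
  F = Q \/ F = (@emptyset R n) \/
  exists (b : 'cV[R]_n) (c : R),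
    (forall x, Q x -> dotv b x <= c) /\ (exists x, Q x /\ dotv b x = c) /\
    F = (fun x => Q x /\ dotv b x = c).

Definition is_proper_face (R : realType) (n : nat) (Q F : 'cV[R]_n -> Prop) : Prop :=
  is_face Q F /\ F <> Q /\ F <> (@emptyset R n).

Definition is_double_face (R : realType) (n : nat) (Q D : 'cV[R]_n -> Prop) : Prop :=
  exists F, is_proper_face Q F /\ D = (fun x => F x \/ F (- x)).

Definition in_df_lattice (R : realType) (n : nat) (Q D : 'cV[R]_n -> Prop) : Prop :=
  D = Q \/ D = (@emptyset R n) \/ is_double_face Q D.

Definition has_antichain (R : realType) (n : nat) (Q : 'cV[R]_n -> Prop) (k : nat) : Prop :=
  exists f : 'I_k -> ('cV[R]_n -> Prop),
    (forall i, in_df_lattice Q (f i)) /\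
    (forall i j, i <> j -> ~ (forall x, f i x -> f j x)).

Definition is_W (R : realType) (n : nat) (Q : 'cV[R]_n -> Prop) (k : nat) : Prop :=
  has_antichain Q k /\ (forall m, has_antichain Q m -> (m <= k)%N).

Definition nonincreasing_for (R : realType) (n : nat) (N : 'cV[R]_n -> R)
  (Sigma : 'M[R]_n -> Prop) : Prop :=
  forall A, Sigma A -> forall x, N (A *m x) <= N x.

(* lprod s t = s (t-1) * ... * s 1 * s 0  (s 0 plays the role of A_{sigma(1)}) *)
Fixpoint lprod (R : realType) (n : nat) (s : nat -> 'M[R]_n) (t : nat) : 'M[R]_n :=
  match t with
  | 0 => 1%:M
  | t'.+1 => s t' *m lprod s t'
  end.

Definition contracts (R : realType) (n : nat) (N : 'cV[R]_n -> R) (s : nat -> 'M[R]_n) : Prop :=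
  exists t : nat, (0 < t)%N /\
    forall x, unit_ball N x -> in_interior (unit_ball N) (lprod s t *m x).

Definition periodic_with (R : realType) (n : nat) (s : nat -> 'M[R]_n) (p : nat) : Prop :=
  (0 < p)%N /\ forall i, s (i + p)%N = s i.

(* Main.v *)
Require Import Defs.
From HB Require Import structures.
From mathcomp Require Import all_boot all_order all_algebra.
From mathcomp Require Import reals.
From Stdlib Require Import ClassicalEpsilon FunctionalExtensionality PropExtensionality Classical.
Set Implicit Arguments. Unset Strict Implicit. Unset Printing Implicit Defensive.
Import Order.TTheory GRing.Theory Num.Theory.
Local Open Scope ring_scope.

Lemma sn0 (R : realType) (n : nat) (N : 'cV[R]_n -> R) : is_seminorm N -> N 0 = 0.
Proof. by case=> _ H; rewrite -(scale0r 0) H normr0 mul0r. Qed.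

Lemma snN (R : realType) (n : nat) (N : 'cV[R]_n -> R) x : is_seminorm N -> N (- x) = N x.
Proof. by case=> _ H; rewrite -scaleN1r H normrN normr1 mul1r. Qed.

Lemma snge0 (R : realType) (n : nat) (N : 'cV[R]_n -> R) x : is_seminorm N -> 0 <= N x.
Proof.
move=> HN; have := (proj1 HN) x (- x); rewrite subrr sn0 // snN //.
by rewrite -mulr2n pmulrn_lge0.
Qed.

Lemma snZ (R : realType) (n : nat) (N : 'cV[R]_n -> R) a x : is_seminorm N -> N (a *: x) = `|a| * N x.
Proof. by case=> _ H; apply: H. Qed.

Lemma snD (R : realType) (n : nat) (N : 'cV[R]_n -> R) x y : is_seminorm N -> N (x + y) <= N x + N y.
Proof. by case=> H _; apply: H. Qed.

Lemma sn_sum (R : realType) (n : nat) (N : 'cV[R]_n -> R) (I : finType) (F : I -> 'cV[R]_n) :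
  is_seminorm N -> N (\sum_i F i) <= \sum_i N (F i).
Proof.
move=> HN; elim/big_ind2: _ => //; first by rewrite sn0.
by move=> x1 x2 y1 y2 h1 h2; apply: le_trans (snD _ _ HN) _; apply: lerD.
Qed.

Lemma not_interior (R : realType) (n : nat) (N : 'cV[R]_n -> R) z :
  is_seminorm N -> N z = 1 -> ~ in_interior (unit_ball N) z.
Proof.
move=> HN Nz [e [e0 He]].
set S := \sum_(j < n) `|z j 0|.
have S0 : 0 <= S by apply: sumr_ge0 => j _.
set d := e / (S + 1).
have d0 : 0 < d by apply: divr_gt0 => //; apply: ltr_wpDl.
have := He ((1 + d) *: z).
rewrite /unit_ball snZ // Nz mulr1 ger0_norm; last by apply: addr_ge0 => //; apply: ltW.
have Hy : (forall i, `|((1 + d) *: z) i 0 - z i 0| < e).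
  move=> i; rewrite mxE mulrDl mul1r addrC addKr normrM (gtr0_norm d0).
  have zi : `|z i 0| <= S.
    rewrite /S (bigD1 i) //= lerDl; by apply: sumr_ge0.
  apply: (le_lt_trans (ler_wpM2l (ltW d0) zi)).
  rewrite /d mulrAC ltr_pdivrMr; last by apply: ltr_wpDl.
  by rewrite ltr_pM2l // ltrDl.
move=> /(_ Hy); rewrite -[X in _ <= X]addr0 lerD2l leNgt d0.
by [].
Qed.

Lemma col_sum_delta (R : realType) (n : nat) (w : 'cV[R]_n) :
  w = \sum_(i < n) w i 0 *: delta_mx i 0.
Proof.
rewrite {1}(matrix_sum_delta w); apply: eq_bigr => i _.
by rewrite big_ord1.
Qed.

Lemma interior_lt1 (R : realType) (n : nat) (N : 'cV[R]_n -> R) z :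
  is_seminorm N -> N z < 1 -> in_interior (unit_ball N) z.
Proof.
move=> HN Nz.
set C := \sum_(i < n) N (delta_mx i 0 : 'cV[R]_n).
have C0 : 0 <= C by apply: sumr_ge0 => i _; apply: snge0.
exists ((1 - N z) / (1 + C)); split.
  apply: divr_gt0; first by rewrite subr_gt0.
  by apply: ltr_wpDr.

move=> y Hy; rewrite /unit_ball.
have -> : y = z + (y - z) by rewrite addrC subrK.
apply: (le_trans (snD _ _ HN)).
have : N (y - z) <= (1 - N z) / (1 + C) * C.
  rewrite (col_sum_delta (y - z)).
  apply: (le_trans (sn_sum _ HN)).
  rewrite /C mulr_sumr; apply: ler_sum => i _.
  rewrite snZ // ler_wpM2r //; first by apply: snge0.
  by rewrite !mxE ltW.
move=> H1; rewrite -lerBrDl; apply: (le_trans H1).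
rewrite mulrAC ler_pdivrMr; last by apply: ltr_wpDr.
rewrite ler_pM2l ?subr_gt0 // lerDr ler01 //.
Qed.

Definition fr (R : realType) (n : nat) (r : 'rV[R]_n) (x : 'cV[R]_n) : R := (r *m x) 0 0.

Lemma mul_rank1 (R : realType) (n : nat) (u : 'cV[R]_n) (r : 'rV[R]_n) x :
  (u *m r) *m x = fr r x *: u.
Proof. by rewrite -mulmxA /fr {1}[r *m x]mx11_scalar mul_mx_scalar. Qed.

Lemma frZ (R : realType) (n : nat) (r : 'rV[R]_n) a x : fr r (a *: x) = a * fr r x.
Proof. by rewrite /fr -scalemxAr mxE. Qed.

Lemma lprod_noninc (R : realType) (n : nat) (N : 'cV[R]_n -> R) Sigma s t x :
  nonincreasing_for N Sigma -> (forall i, Sigma (s i)) -> N (lprod s t *m x) <= N x.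
Proof.
move=> HS Hs; elim: t => [|t IH] /=; first by rewrite mul1mx.
by rewrite -mulmxA; apply: le_trans (HS _ (Hs t) _) IH.
Qed.

Lemma cycle_lemma (R : realType) (n : nat) (N : 'cV[R]_n -> R) (K : nat)
  (v : 'I_K -> 'cV[R]_n) (r : 'I_K -> 'rV[R]_n) (a0 : 'I_K) :
  is_seminorm N ->
  (forall a x, `|fr (r a) x| <= N x) ->
  (forall a, fr (r a) (v a) = 1) ->
  (forall a b, a != b -> `|fr (r a) (v b)| < 1) ->
  (forall a, N (v a) <= 1) ->
  exists Sigma : 'M[R]_n -> Prop,
    nonincreasing_for N Sigma /\
    (forall (s : nat -> 'M[R]_n) (p : nat),
        (forall i, Sigma (s i)) -> periodic_with s p -> (p < K)%N -> contracts N s) /\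
    ~ (forall s : nat -> 'M[R]_n, (forall i, Sigma (s i)) -> contracts N s).
Proof.
move=> HN H1 H2 H3 H4.
have Nv1 : forall a, N (v a) = 1.
  move=> a; apply/le_anti; rewrite H4 /=.
  by have := H1 a (v a); rewrite H2 normr1.
pose M a := v (ordS a) *m r a.
have MvE : forall a x, M a *m x = fr (r a) x *: v (ordS a) by move=> a x; rewrite mul_rank1.
have Minj : forall a b, M a = M b -> a = b.
  move=> a b Hab; apply/eqP; rewrite eq_sym; apply/negPn/negP => Hba.
  have := congr1 (fun A => N (A *m v a)) Hab; rewrite /= !MvE !snZ // !Nv1 !mulr1 H2 normr1.
  by move=> E; have := H3 _ _ Hba; rewrite -E ltxx.
pose Sigma := fun A => exists a, A = M a.
have HS : nonincreasing_for N Sigma.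
  move=> A [a ->] x; rewrite MvE snZ // Nv1 mulr1; exact: H1.
exists Sigma; split => //; split.
- move=> s p Hs [p0 Hp] pK.
  pose sg i := proj1_sig (constructive_indefinite_description _ (Hs i)).
  have sgE : forall i, s i = M (sg i) by move=> i; rewrite /sg; case: constructive_indefinite_description.
  have [i Hi] : exists i, sg i.+1 != ordS (sg i).
    apply: NNPP => Hall.
    have Hall' : forall i, sg i.+1 = ordS (sg i).
      move=> i; apply/eqP; apply: NNPP => Hne; apply: Hall; exists i; exact/negP.
    have Hv : forall i, val (sg i) = ((val (sg 0%N) + i) %% K)%N.
      elim=> [|i IH]; first by rewrite addn0 modn_small // ltn_ord.
      by rewrite Hall' /= IH -addn1 modnDml addn1 addnS.
    have E : sg p = sg 0%N by apply: Minj; rewrite -!sgE -(Hp 0%N).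
    have := Hv p; rewrite E => H0.
    have : ((val (sg 0%N) + 0) == (val (sg 0%N) + p) %[mod K])%N.
      by rewrite addn0 -H0 modn_small // ltn_ord.
    rewrite eqn_modDl mod0n modn_small // => /eqP p00.
    by move: p0; rewrite -p00.
  exists i.+2; split => // x Hx; apply: interior_lt1 => //.
  rewrite /= -!mulmxA !sgE !MvE frZ snZ // Nv1 mulr1 normrM.
  have Hy : `|fr (r (sg i)) (lprod s i *m x)| <= 1.
    apply: le_trans (H1 _ _) _; apply: le_trans (lprod_noninc i x HS Hs) _; exact: Hx.
  have Hq := H3 _ _ Hi.
  apply: (le_lt_trans (ler_wpM2r (normr_ge0 _) Hy)); by rewrite mul1r.
- move=> Hall.
  pose s i := M (iter i (@ordS K) a0).
  have [t [t0 Ht]] := Hall s (fun i => ex_intro _ _ erefl).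
  have E : forall t, lprod s t *m v a0 = v (iter t (@ordS K) a0).
    elim=> [|k IH] /=; first by rewrite mul1mx.
    by rewrite -mulmxA IH /s MvE H2 scale1r.
  have Hb : unit_ball N (v a0) by rewrite /unit_ball Nv1.
  have := Ht (v a0) Hb; rewrite E; apply: not_interior => //.
Qed.

Lemma dotv_fr (R : realType) (n : nat) (b x : 'cV[R]_n) : dotv b x = fr b^T x.
Proof. by rewrite /dotv /fr mxE; apply: eq_bigr => j _; rewrite mxE. Qed.

Lemma frN (R : realType) (n : nat) (r : 'rV[R]_n) x : fr r (- x) = - fr r x.
Proof. by rewrite -scaleN1r frZ mulN1r. Qed.

Lemma frD (R : realType) (n : nat) (r : 'rV[R]_n) x y : fr r (x + y) = fr r x + fr r y.
Proof. by rewrite /fr mulmxDr mxE. Qed.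

Lemma fr_sum (R : realType) (n : nat) (r : 'rV[R]_n) (I : finType) (F : I -> 'cV[R]_n) :
  fr r (\sum_i F i) = \sum_i fr r (F i).
Proof. by rewrite /fr mulmx_sumr summxE. Qed.

Lemma ball_sym (R : realType) (n : nat) (N : 'cV[R]_n -> R) x :
  is_seminorm N -> unit_ball N (- x) <-> unit_ball N x.
Proof. by move=> HN; rewrite /unit_ball snN. Qed.

Lemma face_sub (R : realType) (n : nat) (Q F : 'cV[R]_n -> Prop) x :
  is_face Q F -> F x -> Q x.
Proof. by case=> [->|[->|[b [c [_ [_ ->]]]]]] //; case. Qed.

Lemma lattice_sub (R : realType) (n : nat) (N : 'cV[R]_n -> R) D x :
  is_seminorm N -> in_df_lattice (unit_ball N) D -> D x -> unit_ball N x.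
Proof.
move=> HN [->|[->|[F [[HF _] ->]]]] //.
case=> H; first exact: face_sub HF H.
by apply/(ball_sym _ HN); exact: face_sub HF H.
Qed.

Lemma eq_div1 (R : realType) (c d : R) : c != 0 -> (c^-1 * d = 1) <-> d = c.
Proof.
move=> cn0; split; last by move->; rewrite mulVf.
by move=> h; rewrite -(mulVKf cn0 d) h mulr1.
Qed.

Lemma stepA (R : realType) (n : nat) (N : 'cV[R]_n -> R) (D D' : 'cV[R]_n -> Prop) :
  is_seminorm N -> in_df_lattice (unit_ball N) D -> in_df_lattice (unit_ball N) D' ->
  ~ (forall x, D x -> D' x) -> ~ (forall x, D' x -> D x) ->
  exists rho : 'rV[R]_n,
    (forall x, unit_ball N x -> fr rho x <= 1) /\
    (exists x, unit_ball N x /\ fr rho x = 1) /\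
    (forall x, D x <-> unit_ball N x /\ (fr rho x = 1 \/ fr rho x = -1)).
Proof.
move=> HN HD HD' n1 n2.
case: HD => [EQ|[E0|[F [[HF [FQ F0]] ED]]]].
- by exfalso; apply: n2 => x Hx; rewrite EQ; exact: lattice_sub HD' Hx.
- by exfalso; apply: n1 => x; rewrite E0.
case: HF => [//|[//|[b [c [Hb [[x0 [Qx0 Hx0]] EF]]]]]].
set Q := unit_ball N in Hb Qx0 EF FQ *.
have QN : forall x, Q (- x) <-> Q x by move=> x; exact: ball_sym.
have c0 : 0 <= c.
  have := Hb (- x0) (proj2 (QN x0) Qx0).
  rewrite !dotv_fr frN -dotv_fr Hx0 => h.
  by rewrite -subr_ge0 opprK -mulr2n pmulrn_lge0 in h.
have cn0 : c != 0.
  apply/negP => /eqP c00; apply: FQ; rewrite EF.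
  apply: functional_extensionality => x; apply: propositional_extensionality.
  split; first by case.
  move=> Qx; split => //; apply/le_anti; rewrite Hb //= c00.
  have := Hb _ (proj2 (QN x) Qx); rewrite !dotv_fr frN -dotv_fr c00.
  by rewrite oppr_le0.
have cp : 0 < c by rewrite lt_neqAle eq_sym cn0.
exists (c^-1 *: b^T).
have frE : forall x, fr (c^-1 *: b^T) x = c^-1 * dotv b x.
  by move=> x; rewrite dotv_fr /fr -scalemxAl mxE.
split; [|split].
- move=> x Qx; rewrite frE mulrC ler_pdivrMr // mul1r; exact: Hb.
- by exists x0; split => //; rewrite frE Hx0 mulVf.
- move=> x; rewrite ED EF !frE; split.
  + case=> [[Qx Hx]|[Qx Hx]].
      by split => //; left; apply/eq_div1.
    split; first by apply/QN.
    right; move: Hx; rewrite !dotv_fr frN -dotv_fr => Hx.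
    have -> : dotv b x = - c by rewrite -Hx opprK.
    by rewrite mulrN mulVf.
  + case=> Qx [Hx|Hx]; first by left; split => //; apply/eq_div1.
    right; split; first by apply/QN.
    rewrite !dotv_fr frN -dotv_fr; apply/eq_div1 => //.
    by rewrite mulrN Hx opprK.
Qed.

Lemma stepB (R : realType) (n : nat) (N : 'cV[R]_n -> R) (rho : 'rV[R]_n) :
  is_seminorm N -> (forall x, unit_ball N x -> fr rho x <= 1) ->
  forall x, `|fr rho x| <= N x.
Proof.
move=> HN Hr.
have Ha : forall x, unit_ball N x -> `|fr rho x| <= 1.
  move=> x Qx; rewrite ler_norml Hr // andbT lerNl -frN; apply: Hr.
  by apply/ball_sym.
move=> x; have := snge0 x HN; rewrite le_eqVlt => /orP [/eqP N0|Np].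
- rewrite -N0; apply/negPn/negP; rewrite -ltNge => fp.
  set k := 2 / `|fr rho x|.
  have := Ha (k *: x); rewrite /unit_ball snZ // -N0 mulr0 ler01 => /(_ isT).
  rewrite frZ normrM /k normrM ger0_norm // normfV normr_id divfK ?gt_eqF //.
  by rewrite leNgt ltr1n.
- have := Ha ((N x)^-1 *: x); rewrite /unit_ball snZ // normfV (gtr0_norm Np) mulVf ?gt_eqF //.
  move=> /(_ (lexx _)); rewrite frZ normrM normfV (gtr0_norm Np).
  by rewrite mulrC ler_pdivrMr // mul1r.
Qed.

Lemma sum_lt (R : realType) (K : nat) (w : 'I_K -> R) a :
  (forall c, w c <= 1) -> w a < 1 -> \sum_c w c < \sum_(c < K) (1 : R).
Proof.
move=> Hw Ha; rewrite (bigD1 a) //= [X in _ < X](bigD1 a) //=.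
by apply: ltr_leD => //; apply: ler_sum => c _.
Qed.

Lemma norm_lt1 (R : realType) (t : R) : `|t| <= 1 -> t <> 1 -> t <> -1 -> `|t| < 1.
Proof.
move=> h h1 h2; rewrite lt_neqAle h andbT; apply/negP => /eqP E.
have : (t == 1) || (t == -1) by move: E => /eqP; rewrite eqr_norml => /andP [].
by case/orP => /eqP.
Qed.

Theorem theorem2 (R : realType) (n : nat) (N : 'cV[R]_n -> R) (pstar : nat) :
  polyhedral_seminorm N ->
  (exists x, N x <> 0) ->
  is_W (unit_ball N) pstar ->
  exists Sigma : 'M[R]_n -> Prop,
    nonincreasing_for N Sigma /\
    (forall (s : nat -> 'M[R]_n) (p : nat),
        (forall i, Sigma (s i)) -> periodic_with s p -> (p < pstar)%N -> contracts N s) /\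
    ~ (forall s : nat -> 'M[R]_n, (forall i, Sigma (s i)) -> contracts N s).
Proof.
move=> [HN _] [x1 Hx1] [[f [Hlat Hanti]] _].
case: (ltnP pstar 2) => Hp.
- exists (fun A => A = 1%:M); split; first by move=> A -> x; rewrite mul1mx.
  split.
    move=> s p _ [p0 _] pp; exfalso; have : (p < 1)%N by apply: leq_trans pp _; rewrite -ltnS.
    by rewrite ltnS leqn0 => /eqP p00; move: p0; rewrite p00.
  move=> Hall; have [t [t0 Ht]] := Hall (fun _ => 1%:M) (fun _ => erefl).
  have E : forall t, lprod (fun _ : nat => (1%:M : 'M[R]_n)) t = 1%:M.
    by elim=> [|k IH] //=; rewrite IH mul1mx.
  have Np : 0 < N x1 by rewrite lt_neqAle snge0 // andbT eq_sym; apply/eqP.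
  set z := (N x1)^-1 *: x1.
  have Nz : N z = 1 by rewrite /z snZ // normfV (gtr0_norm Np) mulVf ?gt_eqF.
  have Hb : unit_ball N z by rewrite /unit_ball Nz.
  by have := Ht z Hb; rewrite E mul1mx; apply: not_interior.
have P0 : (0 < pstar)%N by apply: leq_trans Hp.
set o0 : 'I_pstar := Ordinal P0.
set o1 : 'I_pstar := Ordinal Hp.
have other : forall a : 'I_pstar, exists j, j <> a.
  move=> a; case: (eqVneq a o0) => [->|h].
    by exists o1 => /eqP; rewrite -val_eqE.
  by exists o0 => E; move: h; rewrite E eqxx.
have HA : forall a, exists rho : 'rV[R]_n,
    (forall x, unit_ball N x -> fr rho x <= 1) /\
    (exists x, unit_ball N x /\ fr rho x = 1) /\
    (forall x, f a x <-> unit_ball N x /\ (fr rho x = 1 \/ fr rho x = -1)).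
  move=> a; have [j hj] := other a.
  apply: (stepA (D' := f j) HN (Hlat a) (Hlat j)); apply: Hanti => //.
  by move=> E; apply: hj.
pose r a := proj1_sig (constructive_indefinite_description _ (HA a)).
have Hr : forall a, (forall x, unit_ball N x -> fr (r a) x <= 1) /\
    (exists x, unit_ball N x /\ fr (r a) x = 1) /\
    (forall x, f a x <-> unit_ball N x /\ (fr (r a) x = 1 \/ fr (r a) x = -1)).
  by move=> a; rewrite /r; case: constructive_indefinite_description.
have Hr1 : forall a x, `|fr (r a) x| <= N x by move=> a; apply: stepB => //; case: (Hr a).
have QY : forall a x, unit_ball N x -> `|fr (r a) x| <= 1.
  by move=> a x Qx; apply: le_trans (Hr1 a x) Qx.
have HC : forall b a, exists y, unit_ball N y /\ fr (r b) y = 1 /\ (b != a -> `|fr (r a) y| < 1).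
  move=> b a; case: (eqVneq b a) => [<-|hba].
    have [_ [[x [Qx Hx]] _]] := Hr b.
    by exists x; split => //; split => //; rewrite eqxx.
  have H : ~ (forall x, f b x -> f a x) by apply: Hanti; apply/eqP.
  have [x Hx] := not_all_ex_not _ _ H.
  have [fbx nfax] := imply_to_and _ _ Hx.
  have [Qx Hb] := (proj1 ((proj2 (proj2 (Hr b))) x) fbx).
  have lt : `|fr (r a) x| < 1.
    apply: norm_lt1; first exact: QY.
      by move=> E; apply: nfax; apply/(proj2 (proj2 (Hr a))); split => //; left.
    by move=> E; apply: nfax; apply/(proj2 (proj2 (Hr a))); split => //; right.
  case: Hb => Hb.
    by exists x; split => //; split.
  exists (- x); split; first by apply/ball_sym.
  by rewrite !frN Hb opprK normrN; split.
pose Y b a := proj1_sig (constructive_indefinite_description _ (HC b a)).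
have HY : forall b a, unit_ball N (Y b a) /\ fr (r b) (Y b a) = 1 /\ (b != a -> `|fr (r a) (Y b a)| < 1).
  by move=> b a; rewrite /Y; case: constructive_indefinite_description.
pose v b := (pstar%:R : R)^-1 *: \sum_a Y b a.
have Kn0 : (pstar%:R : R) != 0 by rewrite pnatr_eq0 -lt0n.
have Kp : 0 < (pstar%:R : R)^-1 by rewrite invr_gt0 ltr0n.
have sum1 : \sum_(c < pstar) (1 : R) = pstar%:R by rewrite sumr_const card_ord.
apply: (@cycle_lemma R n N pstar v r o0 HN Hr1).
- move=> b; rewrite /v frZ fr_sum.
  under eq_bigr => a _ do rewrite (proj1 (proj2 (HY b a))).
  by rewrite sum1 mulVf.
- move=> a b hab; rewrite /v frZ fr_sum normrM (gtr0_norm Kp).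
  apply: (le_lt_trans (ler_wpM2l (ltW Kp) (ler_norm_sum _ _ _))).
  rewrite -[X in _ < X](mulVf Kn0) ltr_pM2l // -sum1.
  apply: (sum_lt (a := a)); first by move=> c; apply: QY; case: (HY b c).
  by apply: (proj2 (proj2 (HY b a))); rewrite eq_sym.
- move=> b; rewrite /v snZ // (gtr0_norm Kp).
  apply: (le_trans (ler_wpM2l (ltW Kp) (sn_sum _ HN))).
  rewrite -[X in _ <= X](mulVf Kn0) ler_pM2l // -sum1; apply: ler_sum => a _.
  by case: (HY b a).
Qed.
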